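(* Let $p\ge q>0$ with $pq>1$, and let $(u,v)$ be a positive bounded classical solution of $-\Delta u=v^p$, $-\Delta v=u^q$ in $\mathbb{R}^n$. Then $$v^{p+1}(x)\le\frac{p+1}{q+1}\,u^{q+1}(x)\qquad\text{for all }x\in\mathbb{R}^n.$$ *)

(* Defs.v *)
From Stdlib Require Import Reals.
From Stdlib Require Vectors.Fin.
Open Scope R_scope.

Definition Rn (n : nat) : Type := Fin.t n -> R.

Definition upd {n : nat} (x : Rn n) (i : Fin.t n) (t : R) : Rn n :=
  fun j => if Fin.eq_dec i j then t else x j.

Fixpoint sumFin (n : nat) : (Fin.t n -> R) -> R :=
  match n return (Fin.t n -> R) -> R with
  | O => fun _ => 0
  | S m => fun f => f Fin.F1 + sumFin m (fun i => f (Fin.FS i))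
  end.

(* continuity of f : R^n -> R (sup-norm, equivalently Euclidean, topology) *)
Definition continuous_Rn {n : nat} (f : Rn n -> R) : Prop :=
  forall x eps, 0 < eps -> exists delta, 0 < delta /\
    forall y : Rn n, (forall i, Rabs (y i - x i) < delta) ->
      Rabs (f y - f x) < eps.

Definition has_partial {n : nat} (i : Fin.t n) (f : Rn n -> R) (x : Rn n) (l : R) : Prop :=
  derivable_pt_lim (fun t => f (upd x i t)) (x i) l.

Definition C2_with_laplacian {n : nat} (f : Rn n -> R) (lap : Rn n -> R) : Prop :=
  exists (D1 : Fin.t n -> Rn n -> R) (D2 : Fin.t n -> Fin.t n -> Rn n -> R),
    continuous_Rn f /\
    (forall i x, has_partial i f x (D1 i x)) /\
    (forall i, continuous_Rn (D1 i)) /\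
    (forall i j x, has_partial j (D1 i) x (D2 i j x)) /\
    (forall i j, continuous_Rn (D2 i j)) /\
    (forall x, lap x = sumFin n (fun i => D2 i i x)).

Definition pos_bounded_classical_solution (n : nat) (p q : R) (u v : Rn n -> R) : Prop :=
  (forall x, 0 < u x) /\ (forall x, 0 < v x) /\
  (exists M, forall x, u x <= M) /\ (exists M, forall x, v x <= M) /\
  C2_with_laplacian u (fun x => - Rpower (v x) p) /\
  C2_with_laplacian v (fun x => - Rpower (u x) q).

(* Main.v *)
Require Import Defs.
From Stdlib Require Import Reals Lra Lia FunctionalExtensionality.
From Stdlib Require Vectors.Fin.
Open Scope R_scope.

Lemma upd_same n (x : Rn n) i t : upd x i t i = t.
Proof. unfold upd. destruct (Fin.eq_dec i i); congruence. Qed.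

Lemma upd_upd n (x : Rn n) i t s : upd (upd x i t) i s = upd x i s.
Proof. apply functional_extensionality; intro j; unfold upd. destruct (Fin.eq_dec i j); auto. Qed.

Lemma upd_id n (x : Rn n) i : upd x i (x i) = x.
Proof. apply functional_extensionality; intro j; unfold upd. destruct (Fin.eq_dec i j); subst; auto. Qed.

Lemma sumFin_le n (f g : Fin.t n -> R) : (forall j, f j <= g j) -> sumFin n f <= sumFin n g.
Proof.
  induction n; simpl; intros H; [lra|].
  specialize (IHn (fun i => f (Fin.FS i)) (fun i => g (Fin.FS i)) (fun i => H (Fin.FS i))).
  specialize (H Fin.F1). lra.
Qed.

Lemma sumFin_lin n (f : Fin.t n -> R) a b :
  sumFin n (fun j => a * f j + b) = a * sumFin n f + INR n * b.
Proof.
  induction n; cbn [sumFin]; [simpl; ring|].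
  rewrite (IHn (fun i => f (Fin.FS i))). rewrite S_INR. ring.
Qed.

Lemma sumFin_ge_one n (f : Fin.t n -> R) j0 : (forall j, 0 <= f j) -> f j0 <= sumFin n f.
Proof.
  induction n; intros H.
  - inversion j0.
  - simpl. pattern j0; apply Fin.caseS'.
    + assert (0 <= sumFin n (fun i => f (Fin.FS i))).
      { apply Rle_trans with (sumFin n (fun _ => 0)).
        - clear. induction n; simpl; lra.
        - apply sumFin_le; intros; apply H. }
      lra.
    + intro p. specialize (IHn (fun i => f (Fin.FS i)) p (fun i => H (Fin.FS i))).
      specialize (H Fin.F1). simpl in IHn. lra.
Qed.

Lemma sumFin_ext n (f g : Fin.t n -> R) : (forall j, f j = g j) -> sumFin n f = sumFin n g.
Proof. intros H; apply Rle_antisym; apply sumFin_le; intros j; rewrite H; lra. Qed.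

Lemma sumFin_upd n (f g : Fin.t n -> R) i a :
  g i = a -> (forall j, j <> i -> g j = f j) -> sumFin n g = sumFin n f - f i + a.
Proof.
  induction n; intros Hi Hj.
  - inversion i.
  - cbn [sumFin]. revert Hi Hj. pattern i; apply Fin.caseS'.
    + intros Hi Hj. rewrite (sumFin_ext _ (fun j => g (Fin.FS j)) (fun j => f (Fin.FS j))).
      * lra.
      * intros j; apply Hj; discriminate.
    + intros p Hi Hj.
      rewrite (IHn (fun j => f (Fin.FS j)) (fun j => g (Fin.FS j)) p Hi).
      * rewrite (Hj Fin.F1) by discriminate. lra.
      * intros j Hjp. apply Hj. intro E. apply Hjp. apply Fin.FS_inj. exact E.
Qed.

Lemma second_order (h h1 : R -> R) t0 h2 :
  (forall t, derivable_pt_lim h t (h1 t)) -> derivable_pt_lim h1 t0 h2 ->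
  (forall t, h t <= h t0) -> h2 <= 0.
Proof.
  intros H H1 Hmax.
  pose (pr := (fun t => exist _ (h1 t) (H t)) : derivable h).
  assert (E0 : h1 t0 = 0).
  { assert (D := deriv_maximum h (t0 - 1) (t0 + 1) t0 (pr t0) ltac:(lra) ltac:(lra)
      (fun x _ _ => Hmax x)). exact D. }
  destruct (Rle_or_lt h2 0) as [|Hpos]; [assumption|exfalso].
  destruct (H1 (h2/2) ltac:(lra)) as [[d dpos] Hd]. simpl in Hd.
  assert (Hk : forall k, 0 < k < d -> 0 < h1 (t0 + k)).
  { intros k Hk. assert (A := Hd k ltac:(lra) ltac:(rewrite Rabs_right; lra)).
    rewrite E0 in A. apply Rabs_def2 in A. destruct A as [A1 A2].
    assert (B : 0 < (h1 (t0 + k) - 0) / k) by lra.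
    unfold Rdiv in B. rewrite Rminus_0_r in B.
    assert (B2 : 0 < h1 (t0 + k) * / k * k) by (apply Rmult_lt_0_compat; lra).
    rewrite Rmult_assoc, Rinv_l in B2 by lra. lra. }
  destruct (MVT_cor1 h t0 (t0 + d/2) pr ltac:(lra)) as [c [Ec Hc]].
  simpl in Ec.
  assert (P := Hk (c - t0) ltac:(lra)). replace (t0 + (c - t0)) with c in P by ring.
  assert (0 < h1 c * (t0 + d/2 - t0)) by (apply Rmult_lt_0_compat; lra).
  specialize (Hmax (t0 + d/2)). lra.
Qed.

Lemma d_mul f g x a b : derivable_pt_lim f x a -> derivable_pt_lim g x b ->
  derivable_pt_lim (fun t => f t * g t) x (a * g x + f x * b).
Proof. intros; apply (derivable_pt_lim_mult f g x a b); assumption. Qed.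

Lemma d_plus f g x a b : derivable_pt_lim f x a -> derivable_pt_lim g x b ->
  derivable_pt_lim (fun t => f t + g t) x (a + b).
Proof. intros; apply (derivable_pt_lim_plus f g x a b); assumption. Qed.

Lemma d_minus f g x a b : derivable_pt_lim f x a -> derivable_pt_lim g x b ->
  derivable_pt_lim (fun t => f t - g t) x (a - b).
Proof. intros; apply (derivable_pt_lim_minus f g x a b); assumption. Qed.

Lemma d_const c x : derivable_pt_lim (fun _ => c) x 0.
Proof. apply (derivable_pt_lim_const c x). Qed.

Lemma d_id x : derivable_pt_lim (fun t => t) x 1.
Proof. apply (derivable_pt_lim_id x). Qed.

Lemma d_comp f g x a b : derivable_pt_lim g x b -> derivable_pt_lim f (g x) a ->
  derivable_pt_lim (fun t => f (g t)) x (a * b).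
Proof. intros; apply (derivable_pt_lim_comp g f x b a); assumption. Qed.

Lemma d_exp_comp g x b : derivable_pt_lim g x b ->
  derivable_pt_lim (fun t => exp (g t)) x (exp (g x) * b).
Proof. intros; apply d_comp; [assumption|apply derivable_pt_lim_exp]. Qed.

Lemma d_ln_comp g x b : 0 < g x -> derivable_pt_lim g x b ->
  derivable_pt_lim (fun t => ln (g t)) x (/ g x * b).
Proof. intros; apply d_comp; [assumption|apply derivable_pt_lim_ln; assumption]. Qed.

Lemma d_scal f x k a : derivable_pt_lim f x a -> derivable_pt_lim (fun t => k * f t) x (k * a).
Proof. intros; apply (derivable_pt_lim_scal f k x a); assumption. Qed.

Lemma d_opp f x a : derivable_pt_lim f x a -> derivable_pt_lim (fun t => - f t) x (- a).
Proof. intros; apply (derivable_pt_lim_opp f x a); assumption. Qed.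

Lemma d_ext f g x l : (forall t, f t = g t) -> derivable_pt_lim f x l -> derivable_pt_lim g x l.
Proof. intros E H. replace g with f; [assumption|]. apply functional_extensionality; exact E. Qed.

Lemma d_val f x l l' : l = l' -> derivable_pt_lim f x l -> derivable_pt_lim f x l'.
Proof. intros ->; auto. Qed.

Lemma cont_proj n (j : Fin.t n) : continuous_Rn (fun x : Rn n => x j).
Proof. intros x eps He. exists eps; split; auto. Qed.

Lemma cont_plus n (f g : Rn n -> R) : continuous_Rn f -> continuous_Rn g ->
  continuous_Rn (fun x => f x + g x).
Proof.
  intros Hf Hg x eps He.
  destruct (Hf x (eps/2) ltac:(lra)) as [d1 [d1p H1]].
  destruct (Hg x (eps/2) ltac:(lra)) as [d2 [d2p H2]].
  exists (Rmin d1 d2); split; [apply Rmin_glb_lt; auto|].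
  intros y Hy.
  assert (A := H1 y (fun i => Rlt_le_trans _ _ _ (Hy i) (Rmin_l _ _))).
  assert (B := H2 y (fun i => Rlt_le_trans _ _ _ (Hy i) (Rmin_r _ _))).
  replace (f y + g y - (f x + g x)) with ((f y - f x) + (g y - g x)) by ring.
  apply Rle_lt_trans with (1 := Rabs_triang _ _). lra.
Qed.

Lemma cont_comp n (f : Rn n -> R) (h : R -> R) : continuous_Rn f ->
  (forall x, exists l, derivable_pt_lim h (f x) l) -> continuous_Rn (fun x => h (f x)).
Proof.
  intros Hf Hh x eps He.
  destruct (Hh x) as [l Hl].
  assert (C := derivable_continuous_pt h (f x) (exist _ l Hl)).
  destruct (C eps He) as [alp [alpp Ha]].
  destruct (Hf x alp alpp) as [d [dp Hd]].
  exists d; split; auto. intros y Hy.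
  destruct (Req_dec (f y) (f x)) as [E|E].
  - rewrite E, Rminus_diag, Rabs_R0; auto.
  - apply (Ha (f y)). split.
    + split; [exact I|auto].
    + apply Hd; auto.
Qed.

Lemma cont_sumFin k : forall n (g : Fin.t n -> Rn k -> R), (forall j, continuous_Rn (g j)) ->
  continuous_Rn (fun x => sumFin n (fun j => g j x)).
Proof.
  induction n; intros g Hg; cbn [sumFin].
  - intros x eps He; exists 1; split; [lra|]. intros; rewrite Rminus_diag, Rabs_R0; auto.
  - apply cont_plus; [apply Hg|]. apply (IHn (fun j => g (Fin.FS j))). intros; apply Hg.
Qed.

Lemma line_deriv n (f : Rn n -> R) D1 D2 c i :
  (forall i x, has_partial i f x (D1 i x)) ->
  (forall i j x, has_partial j (D1 i) x (D2 i j x)) ->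
  (forall t, derivable_pt_lim (fun s => f (upd c i s)) t (D1 i (upd c i t))) /\
  derivable_pt_lim (fun s => D1 i (upd c i s)) (c i) (D2 i i c).
Proof.
  intros H1 H2; split.
  - intros t. specialize (H1 i (upd c i t)). unfold has_partial in H1.
    rewrite upd_same in H1. eapply d_ext; [|exact H1]. intros s; simpl. rewrite upd_upd. reflexivity.
  - exact (H2 i i c).
Qed.

Lemma exp_le' x y : x <= y -> exp x <= exp y.
Proof. intros [H|H]; [left; apply exp_increasing; auto|rewrite H; lra]. Qed.

Lemma ln_le' x y : 0 < x -> x <= y -> ln x <= ln y.
Proof. intros Hx [H|H]; [left; apply ln_increasing; auto|rewrite H; lra]. Qed.

Lemma pow_mono e x y : 0 <= e -> 0 < x -> x <= y -> exp (e * ln x) <= exp (e * ln y).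
Proof. intros He Hx Hxy. apply exp_le'. apply Rmult_le_compat_l; auto. apply ln_le'; auto. Qed.

Lemma pow_anti e x y : e <= 0 -> 0 < x -> x <= y -> exp (e * ln y) <= exp (e * ln x).
Proof.
  intros He Hx Hxy. apply exp_le'. assert (ln x <= ln y) by (apply ln_le'; auto). nra.
Qed.

Lemma key_gap p h a v Mv : 0 < p -> 0 < h -> 0 < a -> a + 2 * h <= v -> v <= Mv ->
  exp (p * ln h) * (exp (p * ln (1 + h / Mv)) - 1) <= exp (p * ln v) - exp (p * ln a).
Proof.
  intros Hp Hh Ha Hv HM.
  set (y := v - h).
  assert (Hy : h < y) by (unfold y; lra).
  assert (E1 : exp (p * ln a) <= exp (p * ln y)) by (apply pow_mono; unfold y in *; lra).
  assert (Ev : v = y * (1 + h / y)) by (unfold y; field; lra).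
  assert (E2 : exp (p * ln v) = exp (p * ln y) * exp (p * ln (1 + h / y))).
  { rewrite Ev at 1. rewrite ln_mult, Rmult_plus_distr_l, exp_plus; auto; try lra.
    assert (0 < h / y) by (apply Rdiv_lt_0_compat; lra). lra. }
  assert (E3 : exp (p * ln (1 + h / Mv)) <= exp (p * ln (1 + h / y))).
  { apply pow_mono; try lra.
    - assert (0 < h / Mv) by (apply Rdiv_lt_0_compat; lra). lra.
    - apply Rplus_le_compat_l. apply Rmult_le_compat_l; [lra|]. apply Rinv_le_contravar; unfold y in *; lra. }
  assert (E4 : 1 < exp (p * ln (1 + h / Mv))).
  { assert (0 < h / Mv) by (apply Rdiv_lt_0_compat; lra).
    assert (L1 : ln 1 < ln (1 + h / Mv)) by (apply ln_increasing; lra).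
    rewrite ln_1 in L1.
    assert (exp 0 < exp (p * ln (1 + h / Mv))) by (apply exp_increasing; apply Rmult_lt_0_compat; auto).
    rewrite exp_0 in *. lra. }
  assert (E5 : exp (p * ln h) <= exp (p * ln y)) by (apply pow_mono; lra).
  assert (0 < exp (p * ln h)) by apply exp_pos.
  rewrite E2. nra.
Qed.

Lemma sumFin_nonneg n (f : Fin.t n -> R) : (forall j, 0 <= f j) -> 0 <= sumFin n f.
Proof.
  intros H. apply Rle_trans with (sumFin n (fun _ => 0)).
  - clear. induction n; simpl; lra.
  - apply sumFin_le; auto.
Qed.

Lemma exp_sm1 s U : 0 < U -> exp ((s - 1) * ln U) = exp (s * ln U) * / U.
Proof.
  intros HU. replace ((s - 1) * ln U) with (s * ln U + - ln U) by ring.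
  rewrite exp_plus, exp_Ropp, exp_ln; auto.
Qed.

Lemma pointwise_ineq n (u v : Rn n -> R) Du1 Du2 Dv1 Dv2 (l s eps : R) (c : Rn n) i :
  (forall i x, has_partial i u x (Du1 i x)) ->
  (forall i j x, has_partial j (Du1 i) x (Du2 i j x)) ->
  (forall i x, has_partial i v x (Dv1 i x)) ->
  (forall i j x, has_partial j (Dv1 i) x (Dv2 i j x)) ->
  (forall x, 0 < u x) -> 0 < l -> 0 < s -> s <= 1 ->
  (forall y, v y + - (l * exp (s * ln (u y))) + - eps * sumFin n (fun j => y j * y j)
           <= v c + - (l * exp (s * ln (u c))) + - eps * sumFin n (fun j => c j * c j)) ->
  Dv2 i i c <= l * s * exp ((s - 1) * ln (u c)) * Du2 i i c + 2 * eps.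
Proof.
  intros Pu1 Pu2 Pv1 Pv2 Hu Hl Hs Hs1 Hmax.
  destruct (line_deriv n u Du1 Du2 c i Pu1 Pu2) as [DU DU'].
  destruct (line_deriv n v Dv1 Dv2 c i Pv1 Pv2) as [DV DV'].
  set (U := fun t => u (upd c i t)). set (U1 := fun t => Du1 i (upd c i t)).
  set (P0 := sumFin n (fun j => c j * c j) - c i * c i).
  assert (Pen : forall t, sumFin n (fun j => upd c i t j * upd c i t j) = P0 + t * t).
  { intros t. unfold P0. rewrite (sumFin_upd n (fun j => c j * c j) _ i (t * t)).
    - ring.
    - rewrite upd_same; ring.
    - intros j Hj. unfold upd. destruct (Fin.eq_dec i j); [congruence|reflexivity]. }
  set (h := fun t => v (upd c i t) + - (l * exp (s * ln (U t))) + - eps * (P0 + t * t)).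
  set (h1 := fun t => Dv1 i (upd c i t) + - (l * s * (exp ((s - 1) * ln (U t)) * U1 t)) + - eps * (2 * t)).
  assert (Hh : forall t, derivable_pt_lim h t (h1 t)).
  { intros t. unfold h, h1.
    assert (HU : 0 < U t) by apply Hu.
    assert (A1 := DV t).
    assert (A2 : derivable_pt_lim (fun t => - (l * exp (s * ln (U t)))) t
                   (- (l * (exp (s * ln (U t)) * (s * (/ U t * U1 t)))))).
    { apply (d_opp (fun t => l * exp (s * ln (U t)))).
      apply (d_scal (fun t => exp (s * ln (U t)))).
      apply (d_exp_comp (fun t => s * ln (U t))).
      apply (d_scal (fun t => ln (U t))).
      apply (d_ln_comp U); [exact HU| apply DU]. }
    assert (A3 : derivable_pt_lim (fun t => - eps * (P0 + t * t)) t (- eps * (0 + (1 * t + t * 1)))).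
    { apply (d_scal (fun t => P0 + t * t)). apply (d_plus (fun _ => P0) (fun t => t * t)); [apply d_const|].
      apply (d_mul (fun t => t) (fun t => t)); apply d_id. }
    eapply d_val; [|exact (d_plus _ _ _ _ _ (d_plus _ _ _ _ _ A1 A2) A3)].
    rewrite (exp_sm1 s (U t) HU). unfold U1. field. lra. }
  assert (U0 : U (c i) = u c) by (unfold U; rewrite upd_id; reflexivity).
  assert (HU0 : 0 < U (c i)) by (rewrite U0; apply Hu).
  assert (B2 : derivable_pt_lim (fun t => - (l * s * (exp ((s - 1) * ln (U t)) * U1 t))) (c i)
     (- (l * s * ((exp ((s - 1) * ln (U (c i))) * ((s - 1) * (/ U (c i) * U1 (c i)))) * U1 (c i)
                  + exp ((s - 1) * ln (U (c i))) * Du2 i i c)))).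
  { apply (d_opp (fun t => l * s * (exp ((s - 1) * ln (U t)) * U1 t))).
    apply (d_scal (fun t => exp ((s - 1) * ln (U t)) * U1 t)).
    apply (d_mul (fun t => exp ((s - 1) * ln (U t))) U1); [|exact DU'].
    apply (d_exp_comp (fun t => (s - 1) * ln (U t))).
    apply (d_scal (fun t => ln (U t))).
    apply (d_ln_comp U); [exact HU0| apply DU]. }
  assert (B3 : derivable_pt_lim (fun t => - eps * (2 * t)) (c i) (- eps * (2 * 1))).
  { apply (d_scal (fun t => 2 * t)). apply (d_scal (fun t => t)). apply d_id. }
  assert (Hh1 := d_plus _ _ _ _ _ (d_plus _ _ _ _ _ DV' B2) B3).
  assert (Hm : forall t, h t <= h (c i)).
  { intros t. unfold h. specialize (Hmax (upd c i t)). rewrite Pen in Hmax.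
    unfold U at 2. rewrite upd_id. unfold P0 in *. unfold U. lra. }
  assert (S := second_order h h1 (c i) _ Hh Hh1 Hm).
  rewrite U0 in S.
  set (E := exp ((s - 1) * ln (u c))) in *.
  assert (HE : 0 < E) by apply exp_pos.
  assert (Hiu : 0 < / u c) by (apply Rinv_0_lt_compat; apply Hu).
  assert (Q : 0 <= l * s * E * / u c * (U1 (c i) * U1 (c i))).
  { apply Rmult_le_pos; [|apply Rle_0_sqr].
    repeat apply Rmult_le_pos; lra. }
  nra.
Qed.

Definition EVT_box_stmt := forall n (F : Rn n -> R) (B : R), Rle 0 B -> continuous_Rn F ->
  exists c : Rn n, (forall i, Rle (Rabs (c i)) B) /\
    forall y : Rn n, (forall i, Rle (Rabs (y i)) B) -> Rle (F y) (F c).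

Lemma lemma2p5_aux (EVT_box : EVT_box_stmt) (n : nat) (p q : R) (u v : Rn n -> R)
  (hpq : q <= p) (hq : 0 < q) (hpq1 : 1 < p * q)
  (hsol : pos_bounded_classical_solution n p q u v) :
  forall x : Rn n,
    Rpower (v x) (p + 1) <= (p + 1) / (q + 1) * Rpower (u x) (q + 1).
Proof.
  destruct hsol as [Hu [Hv [[Mu HMu] [[Mv HMv] [CU CV]]]]].
  destruct CU as [Du1 [Du2 [Cu [Pu1 [CDu1 [Pu2 [CDu2 LapU]]]]]]].
  destruct CV as [Dv1 [Dv2 [Cv [Pv1 [CDv1 [Pv2 [CDv2 LapV]]]]]]].
  assert (hp : 0 < p) by lra.
  set (L := (p + 1) / (q + 1)).
  set (s := (q + 1) / (p + 1)).
  assert (HL : 0 < L) by (unfold L; apply Rdiv_lt_0_compat; lra).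
  assert (Hs : 0 < s) by (unfold s; apply Rdiv_lt_0_compat; lra).
  assert (Hs1 : s <= 1).
  { unfold s. apply (Rmult_le_reg_r (p + 1)); [lra|]. unfold Rdiv.
    rewrite Rmult_assoc, Rinv_l by lra. lra. }
  assert (HsL : s * L = 1) by (unfold s, L; field; lra).
  set (lam := ln L / (p + 1)).
  set (l := exp lam).
  assert (Hl : 0 < l) by apply exp_pos.
  assert (Claim : forall x, v x <= l * exp (s * ln (u x))).
  { intros x1. destruct (Rle_or_lt (v x1) (l * exp (s * ln (u x1)))) as [|Hlt]; [assumption|exfalso].
    set (W := fun x => v x + - (l * exp (s * ln (u x)))).
    set (delta := W x1).
    assert (Hd : 0 < delta) by (unfold delta, W; lra).
    assert (HMv0 : 0 < Mv) by (specialize (HMv x1); specialize (Hv x1); lra).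
    assert (HMu0 : 0 < Mu) by (specialize (HMu x1); specialize (Hu x1); lra).
    set (hh := delta / 4).
    assert (Hhh : 0 < hh) by (unfold hh; lra).
    set (k0 := exp (p * ln hh) * (exp (p * ln (1 + hh / Mv)) - 1)).
    assert (Hk0 : 0 < k0).
    { unfold k0. apply Rmult_lt_0_compat; [apply exp_pos|].
      assert (0 < hh / Mv) by (apply Rdiv_lt_0_compat; lra).
      assert (L1 : ln 1 < ln (1 + hh / Mv)) by (apply ln_increasing; lra).
      rewrite ln_1 in L1.
      assert (exp 0 < exp (p * ln (1 + hh / Mv))) by (apply exp_increasing; apply Rmult_lt_0_compat; auto).
      rewrite exp_0 in *. lra. }
    set (Kc := l * s * exp ((s - 1) * ln Mu) * k0).
    assert (HKc : 0 < Kc).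
    { unfold Kc. assert (0 < exp ((s - 1) * ln Mu)) by apply exp_pos. assert (0 < l * s) by (apply Rmult_lt_0_compat; lra). apply Rmult_lt_0_compat; [apply Rmult_lt_0_compat|]; lra. }
    set (Pen := fun x : Rn n => sumFin n (fun j => x j * x j)).
    assert (HPen : forall x, 0 <= Pen x).
    { intros x; apply sumFin_nonneg; intros j; apply Rle_0_sqr. }
    set (eps := Rmin (delta / (2 * (Pen x1 + 1))) (Kc / (2 * INR n + 2))).
    assert (Hn : 0 <= INR n) by apply pos_INR.
    assert (HP1 := HPen x1).
    assert (He : 0 < eps).
    { unfold eps. apply Rmin_glb_lt; apply Rdiv_lt_0_compat; lra. }
    assert (He1 : eps * Pen x1 <= delta / 2).
    { assert (E := Rmin_l (delta / (2 * (Pen x1 + 1))) (Kc / (2 * INR n + 2))).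
      fold eps in E. apply Rmult_le_compat_r with (r := 2 * (Pen x1 + 1)) in E; [|lra].
      unfold Rdiv in E. rewrite Rmult_assoc, Rinv_l in E by lra. nra. }
    assert (He2 : 2 * INR n * eps < Kc).
    { assert (E := Rmin_r (delta / (2 * (Pen x1 + 1))) (Kc / (2 * INR n + 2))).
      fold eps in E. apply Rmult_le_compat_r with (r := 2 * INR n + 2) in E; [|lra].
      unfold Rdiv in E. rewrite Rmult_assoc, Rinv_l in E by lra. nra. }
    set (F := fun x => v x + - (l * exp (s * ln (u x))) + - eps * Pen x).
    assert (CF : continuous_Rn F).
    { unfold F. apply cont_plus; [apply cont_plus|].
      - exact Cv.
      - apply (cont_comp n u (fun y => - (l * exp (s * ln y)))); [exact Cu|].
        intros x. eexists.
        apply (d_opp (fun y => l * exp (s * ln y))).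
        apply (d_scal (fun y => exp (s * ln y))).
        apply (d_exp_comp (fun y => s * ln y)).
        apply (d_scal ln). apply derivable_pt_lim_ln. apply Hu.
      - apply (cont_comp n Pen (fun y => - eps * y)).
        + unfold Pen. apply (cont_sumFin n n (fun j x => x j * x j)). intros j.
          apply (cont_comp n (fun x => x j) (fun y => y * y)); [apply cont_proj|].
          intros x. eexists. apply (d_mul (fun y => y) (fun y => y)); apply d_id.
        + intros x. eexists. apply (d_scal (fun y => y)). apply d_id. }
    set (B := Mv / eps + 1).
    assert (HB : 1 <= B).
    { unfold B. assert (0 < Mv / eps) by (apply Rdiv_lt_0_compat; lra). lra. }
    assert (HBe : eps * B = Mv + eps) by (unfold B; field; lra).
    assert (Out : forall y, (exists j, B < Rabs (y j)) -> F y < 0).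
    { intros y [j Hj].
      assert (G := sumFin_ge_one n (fun j => y j * y j) j (fun j => Rle_0_sqr (y j))).
      simpl in G.
      assert (Sq : y j * y j = Rabs (y j) * Rabs (y j)).
      { rewrite <- Rabs_mult. rewrite Rabs_right; [reflexivity|]. apply Rle_ge, Rle_0_sqr. }
      assert (HvY := HMv y).
      assert (0 < l * exp (s * ln (u y))) by (apply Rmult_lt_0_compat; [lra|apply exp_pos]).
      assert (T1 : B * B < y j * y j).
      { rewrite Sq. assert (0 <= B) by lra. apply Rmult_le_0_lt_compat; lra. }
      assert (T2 : eps * B <= eps * (B * B)) by (apply Rmult_le_compat_l; nra).
      assert (T3 : eps * (B * B) < eps * (y j * y j)) by (apply Rmult_lt_compat_l; lra).
      assert (T4 : eps * (y j * y j) <= eps * Pen y) by (apply Rmult_le_compat_l; [lra|exact G]).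
      unfold F. lra. }
    destruct (EVT_box n F B ltac:(lra) CF) as [c [Hcbox Hcmax]].
    assert (HF1 : delta / 2 <= F x1) by (unfold F, delta, W in *; lra).
    assert (In1 : forall j, Rabs (x1 j) <= B).
    { intros j. destruct (Rle_or_lt (Rabs (x1 j)) B) as [|Hj]; [assumption|].
      assert (F x1 < 0) by (apply Out; exists j; exact Hj). lra. }
    assert (Hc1 : F x1 <= F c) by (apply Hcmax; exact In1).
    assert (Gmax : forall y, F y <= F c).
    { intros y. destruct (Classical_Prop.classic (forall j, Rabs (y j) <= B)) as [Hy|Hy].
      - apply Hcmax; exact Hy.
      - apply Classical_Pred_Type.not_all_ex_not in Hy. destruct Hy as [j Hj].
        assert (F y < 0) by (apply Out; exists j; lra). lra. }
    assert (Hi : forall i, Dv2 i i c <= l * s * exp ((s - 1) * ln (u c)) * Du2 i i c + 2 * eps).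
    { intros i. apply (pointwise_ineq n u v Du1 Du2 Dv1 Dv2 l s eps c i); auto. }
    set (E := exp ((s - 1) * ln (u c))) in *.
    assert (Sum : sumFin n (fun i => Dv2 i i c) <= (l * s * E) * sumFin n (fun i => Du2 i i c) + INR n * (2 * eps)).
    { rewrite <- sumFin_lin. apply sumFin_le. exact Hi. }
    rewrite <- LapV, <- LapU in Sum. unfold Rpower in Sum.
    assert (Wc : delta / 2 <= W c).
    { assert (HPc := HPen c). assert (0 <= eps * Pen c) by (apply Rmult_le_pos; lra).
      unfold F, W in *. lra. }
    set (a := l * exp (s * ln (u c))).
    assert (Ha : 0 < a) by (apply Rmult_lt_0_compat; [lra|apply exp_pos]).
    assert (Hav : a + 2 * hh <= v c) by (unfold W, a, hh in *; lra).
    assert (KG := key_gap p hh a (v c) Mv hp Hhh Ha Hav (HMv c)). fold k0 in KG.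
    assert (Ident : l * s * E * exp (p * ln a) = exp (q * ln (u c))).
    { assert (Huc := Hu c).
      unfold a. rewrite ln_mult by (try lra; apply exp_pos). rewrite ln_exp.
      replace (ln l) with lam by (unfold l; rewrite ln_exp; reflexivity).
      replace (l * s * E * exp (p * (lam + s * ln (u c))))
        with (s * exp (lam + (s - 1) * ln (u c) + p * (lam + s * ln (u c))))
        by (unfold l, E; rewrite !exp_plus; ring).
      replace (lam + (s - 1) * ln (u c) + p * (lam + s * ln (u c))) with (ln L + q * ln (u c))
        by (unfold lam, s; field; lra).
      rewrite exp_plus, exp_ln by lra.
      replace (s * (L * exp (q * ln (u c)))) with ((s * L) * exp (q * ln (u c))) by ring.
      rewrite HsL. ring. }
    assert (EB : exp ((s - 1) * ln Mu) <= E).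
    { unfold E. apply pow_anti; [lra|apply Hu|apply HMu]. }
    assert (Hls : 0 < l * s) by (apply Rmult_lt_0_compat; lra).
    assert (G1 : Kc <= l * s * E * k0).
    { unfold Kc. apply Rmult_le_compat_r; [lra|]. apply Rmult_le_compat_l; lra. }
    assert (G2 : l * s * E * k0 <= l * s * E * (exp (p * ln (v c)) - exp (p * ln a))).
    { apply Rmult_le_compat_l; [|exact KG]. assert (0 < E) by apply exp_pos. nra. }
    lra. }
  intros x. unfold Rpower.
  assert (Hux := Hu x). assert (Hvx := Hv x).
  assert (A : 0 < l * exp (s * ln (u x))) by (apply Rmult_lt_0_compat; [lra|apply exp_pos]).
  apply Rle_trans with (exp ((p + 1) * ln (l * exp (s * ln (u x))))).
  { apply pow_mono; [lra|lra|apply Claim]. }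
  rewrite ln_mult, ln_exp by (try lra; apply exp_pos).
  unfold l. rewrite ln_exp.
  replace ((p + 1) * (lam + s * ln (u x))) with (ln L + (q + 1) * ln (u x))
    by (unfold lam, s; field; lra).
  rewrite exp_plus, exp_ln by lra. unfold L. lra.
Qed.

From mathcomp Require Import all_boot all_order all_algebra.
From mathcomp Require Import all_classical all_reals.
From mathcomp Require Import topology normedtype derive Rstruct Rstruct_topology.
Import Order.TTheory GRing.Theory Num.Theory.
Local Open Scope classical_set_scope.

Definition finO {n} (i : Fin.t n) : 'I_n := Ordinal (introT ssrnat.ltP (proj2_sig (Fin.to_nat i))).
Definition ordF {n} (j : 'I_n) : Fin.t n := Fin.of_nat_lt (elimT ssrnat.ltP (ltn_ord j)).
Lemma ordF_finO n (i : Fin.t n) : ordF (finO i) = i.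
Proof.
rewrite /ordF /finO /=. rewrite -[in RHS](Fin.of_nat_to_nat_inv i).
apply: Fin.of_nat_ext.
Qed.

Lemma EVT_box n (F : Rn n -> R) (B : R) : Rle 0 B -> continuous_Rn F ->
  exists c : Rn n, (forall i, Rle (Rabs (c i)) B) /\
    forall y : Rn n, (forall i, Rle (Rabs (y i)) B) -> Rle (F y) (F c).
Proof.
move=> B0 cF.
pose phi := fun (r : 'rV[R]_n) (i : Fin.t n) => r ord0 (finO i).
pose A := [set v : 'rV[R]_n | forall j, `[(- B)%R, B] (v ord0 j)].
have cA : compact A by exact: (@rV_compact _ n (fun _ => `[(- B)%R, B]) (fun _ => @segment_compact _ (- B)%R B)).
have A0 : (A !=set0)%classic.
  exists (0 : 'rV[R]_n)%R => j /=; rewrite mxE in_itv /= oppr_le0.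
  by apply/andP; split; apply/RleP.
have cG : {within A, continuous (F \o phi)}%classic.
  apply: continuous_subspaceT => r.
  move=> P /= /nbhs_ballP [e /= e0 HP].
  have e0' : Rlt 0 e by apply/RltP.
  have [d [d0 Hd]] := cF (phi r) e e0'.
  exists (fun i0 j => ball (r i0 j) d).
    move=> i0 j; apply/nbhs_ballP; exists d => //; by apply/RltP.
  move=> s Hs; apply: HP; rewrite /ball /=.
  have h : Rabs (F (phi s) - F (phi r)) < e.
    apply: Hd => i; move/RltP: (Hs ord0 (finO i)) => h.
    exact: (Rle_lt_trans _ _ _ (Req_le _ _ (Rabs_minus_sym _ _)) h).
  apply/RltP; exact: (Rle_lt_trans _ _ _ (Req_le _ _ (Rabs_minus_sym _ _)) h).
have [c Ac Hc] := EVT_max_rV A0 cA cG.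
exists (phi c); split.
  move=> i; rewrite inE in Ac; have := Ac (finO i); rewrite /= in_itv /= => /andP[h1 h2].
  apply: Rabs_le; split; apply/RleP => //.
move=> y Hy.
have -> : y = phi ((\row_j y (ordF j))%R).
  apply: funext => i; by rewrite /phi mxE ordF_finO.
apply/RleP; apply: Hc; rewrite inE => j /=; rewrite mxE in_itv /=.
have h := Hy (ordF j); have h1 := Rle_abs (y (ordF j)); have h2 := Rle_abs (- y (ordF j)).
rewrite Rabs_Ropp in h2.
apply/andP; split; apply/RleP; rewrite -?RoppE; lra.
Qed.

Open Scope R_scope.

Theorem lemma2p5 (n : nat) (p q : R) (u v : Rn n -> R)
  (hpq : q <= p) (hq : 0 < q) (hpq1 : 1 < p * q)
  (hsol : pos_bounded_classical_solution n p q u v) :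
  forall x : Rn n,
    Rpower (v x) (p + 1) <= (p + 1) / (q + 1) * Rpower (u x) (q + 1).
Proof.
  exact (lemma2p5_aux EVT_box n p q u v hpq hq hpq1 hsol).
Qed.
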